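(* Let $T\geq 3$ be an integer, $L>0$, $D>0$, and let $\mathcal{K}\subset\mathbb{R}^d$ be a nonempty closed convex set with diameter at most $D$. For $t=1,\dots,T$ let $\ell_t:\mathbb{R}^d\to\mathbb{R}$ be convex and $L$-Lipschitz cost functions. Run the following Online Frank--Wolfe algorithm with parameters $$\eta=\frac{D}{2L}\left(\frac{3}{T}\right)^{3/4},\qquad \sigma=\min\left(1,\sqrt{\frac{3}{T}}\right),$$ starting from some $x_1\in\mathcal{K}$: for $t=1,\dots,T$, play $x_t$, incur $\ell_t(x_t)$, observe $g_t=\nabla \ell_t(x_t)$, set $\mathrm{dir}_t=\eta\sum_{s=1}^t g_s+(x_t-x_1)$, choose $v_t\in\arg\min_{v\in\mathcal{K}}\langle \mathrm{dir}_t,v\rangle$, and set $x_{t+1}=(1-\sigma)x_t+\sigma v_t$. Then for every $x_\star\in\mathcal{K}$, $$R_T\triangleq\sum_{t=1}^T\big(\ell_t(x_t)-\ell_t(x_\star)\big)\leq \frac{2D}{L\,3^{3/4}T^{1/4}}\sum_{t=1}^T\|g_t\|^2+\frac{L}{D\,3^{3/4}T^{1/4}}\sum_{t=1}^T\|x_t-v_t\|^2+\frac{L\,T^{3/4}}{D\,3^{3/4}}\|x_\star-x_1\|^2.$$ In particular, $R_T\leq \frac{4}{3^{3/4}}LDT^{3/4}<1.76\,LDT^{3/4}$.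
   Context: $\|\cdot\|$ is the Euclidean norm. $\nabla\ell_t(x_t)$ denotes the gradient (subgradient) of $\ell_t$ at $x_t$; $v_t$ is any minimizer of the linear function over $\mathcal{K}$ (the linear optimization oracle output). *)

(* Defs.v *)
From HB Require Import structures.
From mathcomp Require Import all_boot all_order all_algebra.
From mathcomp Require Import all_classical all_reals all_analysis.
Set Implicit Arguments. Unset Strict Implicit. Unset Printing Implicit Defensive.
Import Order.TTheory GRing.Theory Num.Theory.
Import numFieldNormedType.Exports.
Local Open Scope ring_scope.
Local Open Scope classical_set_scope.

Definition dotv {R : realType} {d : nat} (u v : 'rV[R]_d) : R :=
  \sum_(i < d) u 0 i * v 0 i.
Definition enorm {R : realType} {d : nat} (u : 'rV[R]_d) : R :=
  Num.sqrt (dotv u u).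

Definition convex_setv {R : realType} {d : nat} (K : set 'rV[R]_d) : Prop :=
  forall x y (lam : R), K x -> K y -> 0 <= lam <= 1 ->
    K (lam *: x + (1 - lam) *: y).

Definition convex_funv {R : realType} {d : nat} (f : 'rV[R]_d -> R) : Prop :=
  forall x y (lam : R), 0 <= lam <= 1 ->
    f (lam *: x + (1 - lam) *: y) <= lam * f x + (1 - lam) * f y.

Definition lipschitzv {R : realType} {d : nat} (L : R) (f : 'rV[R]_d -> R) : Prop :=
  forall x y, `|f x - f y| <= L * enorm (x - y).

Definition diam_le {R : realType} {d : nat} (K : set 'rV[R]_d) (D : R) : Prop :=
  forall x y, K x -> K y -> enorm (x - y) <= D.

Definition subgradient {R : realType} {d : nat} (f : 'rV[R]_d -> R) (x g : 'rV[R]_d) : Prop :=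
  forall y, f x + dotv g (y - x) <= f y.

(* Main.v *)
Require Import Defs.
From HB Require Import structures.
From mathcomp Require Import all_boot all_order all_algebra.
From mathcomp Require Import all_classical all_reals all_analysis.
From mathcomp Require Import ring lra zify.
Import Order.TTheory GRing.Theory Num.Theory.
Import numFieldNormedType.Exports.
Local Open Scope ring_scope.
Local Open Scope classical_set_scope.



Lemma dotvDl {R : realType} {d : nat} (u v w : 'rV[R]_d) :
  dotv (u + v) w = dotv u w + dotv v w.
Proof. by rewrite /dotv -big_split; apply: eq_bigr => i _; rewrite mxE mulrDl. Qed.
Lemma dotvC {R : realType} {d : nat} (u v : 'rV[R]_d) : dotv u v = dotv v u.
Proof. by rewrite /dotv; apply: eq_bigr => i _; rewrite mulrC. Qed.
Lemma dotvDr {R : realType} {d : nat} (u v w : 'rV[R]_d) :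
  dotv w (u + v) = dotv w u + dotv w v.
Proof. by rewrite dotvC dotvDl !(dotvC w). Qed.
Lemma dotvZl {R : realType} {d : nat} (a : R) (u w : 'rV[R]_d) :
  dotv (a *: u) w = a * dotv u w.
Proof. by rewrite /dotv mulr_sumr; apply: eq_bigr => i _; rewrite mxE mulrA. Qed.
Lemma dotvZr {R : realType} {d : nat} (a : R) (u w : 'rV[R]_d) :
  dotv w (a *: u) = a * dotv w u.
Proof. by rewrite dotvC dotvZl dotvC. Qed.
Lemma dotvNl {R : realType} {d : nat} (u w : 'rV[R]_d) :
  dotv (- u) w = - dotv u w.
Proof. by rewrite -scaleN1r dotvZl mulN1r. Qed.
Lemma dotvNr {R : realType} {d : nat} (u w : 'rV[R]_d) :
  dotv w (- u) = - dotv w u.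
Proof. by rewrite dotvC dotvNl dotvC. Qed.
Lemma dotvBl {R : realType} {d : nat} (u v w : 'rV[R]_d) :
  dotv (u - v) w = dotv u w - dotv v w.
Proof. by rewrite dotvDl dotvNl. Qed.
Lemma dotvBr {R : realType} {d : nat} (u v w : 'rV[R]_d) :
  dotv w (u - v) = dotv w u - dotv w v.
Proof. by rewrite dotvDr dotvNr. Qed.
Lemma dotv_ge0 {R : realType} {d : nat} (u : 'rV[R]_d) : 0 <= dotv u u.
Proof. by rewrite /dotv; apply: sumr_ge0 => i _; rewrite -expr2 sqr_ge0. Qed.
Lemma dotv_suml {R : realType} {d : nat} (m n : nat) (f : nat -> 'rV[R]_d) w :
  dotv (\sum_(m <= s < n) f s) w = \sum_(m <= s < n) dotv (f s) w.
Proof.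
rewrite /dotv; under eq_bigr do rewrite summxE mulr_suml.
by rewrite exchange_big.
Qed.
Lemma enorm_sq {R : realType} {d : nat} (u : 'rV[R]_d) : enorm u ^+ 2 = dotv u u.
Proof. by rewrite /enorm sqr_sqrtr // dotv_ge0. Qed.
Lemma coord_le_enorm {R : realType} {d : nat} (u : 'rV[R]_d) i : `|u 0 i| <= enorm u.
Proof.
rewrite /enorm -(@sqrtr_sqr R (u 0 i)) ler_sqrt; last exact: dotv_ge0.
rewrite /dotv (bigD1 i) //= -expr2 lerDl; apply: sumr_ge0 => j _.
by rewrite -expr2 sqr_ge0.
Qed.

Definition Qf {R : realType} {d : nat} (c x1 u : 'rV[R]_d) : R :=
  dotv c u + 1/2 * dotv (u - x1) (u - x1).

Lemma Qexp {R : realType} {d : nat} (c x1 u w : 'rV[R]_d) :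
  Qf c x1 u = Qf c x1 w + dotv (c + (w - x1)) (u - w) + 1/2 * dotv (u - w) (u - w).
Proof.
rewrite /Qf !(dotvDl, dotvDr, dotvNl, dotvNr).
have := dotvC u w; have := dotvC u x1; have := dotvC w x1. lra.
Qed.



Lemma contC {R : realType} {d : nat} (a : R) : continuous (fun _ : 'rV[R]_d => a).
Proof. exact: cst_continuous. Qed.
Lemma contM {R : realType} {d : nat} (f g : 'rV[R]_d -> R) :
  continuous f -> continuous g -> continuous (fun u => f u * g u).
Proof. move=> hf hg x. exact: (continuousM (hf x) (hg x)). Qed.
Lemma contD {R : realType} {d : nat} (f g : 'rV[R]_d -> R) :
  continuous f -> continuous g -> continuous (fun u => f u + g u).
Proof. move=> hf hg x. exact: (continuousD (hf x) (hg x)). Qed.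
Lemma contB {R : realType} {d : nat} (f g : 'rV[R]_d -> R) :
  continuous f -> continuous g -> continuous (fun u => f u - g u).
Proof. move=> hf hg x. exact: (continuousB (hf x) (hg x)). Qed.
Lemma contCo {R : realType} {d : nat} i : continuous (fun u : 'rV[R]_d => u 0 i).
Proof. exact: coord_continuous. Qed.

Lemma sum_cont {R : realType} {d : nat} (fs : 'I_d -> 'rV[R]_d -> R) :
  (forall i, continuous (fs i)) -> continuous (fun u => \sum_(i < d) fs i u).
Proof.
move=> hc; rewrite unlock /=.
elim: (index_enum _) => [|i r IH] /=; first exact: contC.
exact: contD.
Qed.

Lemma Qf_cont {R : realType} {d : nat} (c x1 : 'rV[R]_d) : continuous (Qf c x1).
Proof.
rewrite /Qf; apply: contD.
  by apply: sum_cont => i; apply: contM; [exact: contC | exact: contCo].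
apply: contM; first exact: contC.
apply: sum_cont => i.
have -> : (fun u : 'rV[R]_d => (u - x1) 0 i * (u - x1) 0 i) =
   (fun u => (u 0 i - x1 0 i) * (u 0 i - x1 0 i)).
  by apply: funext => u; rewrite !mxE.
by apply: contM; apply: contB; [exact: contCo | exact: contC | exact: contCo | exact: contC].
Qed.

Lemma exists_min {R : realType} {d : nat} (K : set 'rV[R]_d) (D : R) (c x1 : 'rV[R]_d) :
  K !=set0 -> closed K -> diam_le K D ->
  exists y, K y /\ forall u, K u -> Qf c x1 y <= Qf c x1 u.
Proof.
move=> [x0 Kx0] Kcl Kd.
have Kb : bounded_set K.
  rewrite /= /bounded_near.
  have Dr : (D + `|x0|) \is Num.real by rewrite num_real.
  near=> M => y Ky /=.
  have hM : D + `|x0| <= M by near: M; apply: nbhs_pinfty_ge.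
  apply: le_trans hM.
  have -> : y = (y - x0) + x0 by rewrite subrK.
  apply: le_trans (ler_normD _ _) _; rewrite lerD2r.
  rewrite [leLHS]/Num.norm /= mx_normrE; apply: bigmax_le.
    have := Kd _ _ Kx0 Kx0; rewrite subrr /enorm /dotv big1 ?sqrtr0 // => i _.
    by rewrite mxE mulr0.
  move=> [i j] _ /=; rewrite (ord1 i).
  by apply: le_trans (coord_le_enorm _ _) (Kd _ _ Ky Kx0).
have Kc := bounded_closed_compact Kb Kcl.
have [y yK ymin] := @compact_EVT_min _ R (Qf c x1) K (ex_intro _ x0 Kx0) Kc
  (continuous_subspaceT (Qf_cont c x1)).
exists y; split; first by rewrite inE in yK.
by move=> u Ku; apply: ymin; rewrite inE.
Unshelve. all: by end_near.
Qed.

Lemma opt_strong {R : realType} {d : nat} (K : set 'rV[R]_d) (c x1 y : 'rV[R]_d) :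
  convex_setv K -> K y -> (forall u, K u -> Qf c x1 y <= Qf c x1 u) ->
  forall u, K u -> Qf c x1 y + 1/2 * dotv (u - y) (u - y) <= Qf c x1 u.
Proof.
move=> Kc Ky ymin u Ku.
set z := u - y; set a := dotv (c + (y - x1)) z; set n := dotv z z.
have key : forall lam, 0 < lam <= 1 -> 0 <= lam * a + lam ^+ 2 / 2 * n.
  move=> lam /andP[l0 l1].
  have Kw : K (lam *: u + (1 - lam) *: y) by apply: Kc => //; rewrite ltW.
  have := ymin _ Kw; rewrite [X in _ <= X](Qexp c x1 _ y).
  have -> : lam *: u + (1 - lam) *: y - y = lam *: z.
    by rewrite /z scalerBr scalerBl scale1r (addrC y) addrA addrK.
  rewrite !dotvZr !dotvZl -/a -/n => h; nra.
have n0 : 0 <= n by exact: dotv_ge0.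
have a0 : 0 <= a.
  rewrite leNgt; apply/negP => an.
  have [nz|np] := eqVneq n 0.
    by have := key 1; rewrite ltr01 lexx nz /=; lra.
  have np' : 0 < n by rewrite lt_def np n0.
  pose lam := Order.min 1 (- a / n).
  have l0 : 0 < lam by rewrite lt_min ltr01 /= divr_gt0 // oppr_gt0.
  have l1 : lam <= 1 by rewrite ge_min lexx.
  have ln : lam * n <= - a by rewrite -ler_pdivlMr // ge_min lexx orbT.
  have := key lam; rewrite l0 l1 => /(_ isT); nra.
rewrite (Qexp c x1 u y) -/z -/a -/n; lra.
Qed.



Lemma dotv0l {R : realType} {d : nat} (u : 'rV[R]_d) : dotv 0 u = 0.
Proof. by rewrite /dotv big1 // => i _; rewrite mxE mul0r. Qed.

Lemma n2sym {R : realType} {d : nat} (u w : 'rV[R]_d) :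
  dotv (u - w) (u - w) = dotv (w - u) (w - u).
Proof. by rewrite -opprB dotvNl dotvNr opprK. Qed.

Lemma core {R : realType} {d : nat} (T : nat) (D eta sigma : R)
  (K : set 'rV[R]_d) (ell : nat -> 'rV[R]_d -> R) (x v g : nat -> 'rV[R]_d)
  (xstar : 'rV[R]_d) :
  0 < eta -> 0 < sigma -> sigma <= 1 ->
  K !=set0 -> closed K -> convex_setv K -> diam_le K D ->
  K (x 1%N) ->
  (forall t, (1 <= t <= T)%N ->
     subgradient (ell t) (x t) (g t) /\ K (v t) /\
     (forall w, K w -> dotv (eta *: (\sum_(1 <= s < t.+1) g s) + (x t - x 1%N)) (v t)
                   <= dotv (eta *: (\sum_(1 <= s < t.+1) g s) + (x t - x 1%N)) w) /\
     x t.+1 = (1 - sigma) *: x t + sigma *: v t) ->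
  K xstar ->
  \sum_(1 <= t < T.+1) (ell t (x t) - ell t xstar) <=
   4/3 * eta / sigma * \sum_(1 <= t < T.+1) dotv (g t) (g t)
   + sigma ^+ 2 / (2 * 3 * eta) * \sum_(1 <= t < T.+1) dotv (x t - v t) (x t - v t)
   + 1 / (2 * eta) * dotv (xstar - x 1%N) (xstar - x 1%N).
Proof.
move=> eta0 s0 s1 Kne Kcl Kcv Kd Kx1 H Kxs.
pose c t := eta *: \sum_(1 <= s < t.+1) g s.
pose F t u := Qf (c t) (x 1%N) u.
have xK : forall t, (1 <= t <= T.+1)%N -> K (x t).
  elim=> [//|t IH] ht.
  case: t IH ht => [_ _|t IH ht]; first exact: Kx1.
  have [_ [Kv [_ ->]]] := H t.+1 ltac:(lia).
  have := Kcv (x t.+1) (v t.+1) (1 - sigma) (IH ltac:(lia)) Kv.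
  rewrite subKr; apply; lra.
have [y hy] := choice (fun t => @exists_min R d K D (c t) (x 1%N) Kne Kcl Kd).
have opt : forall t u, K u -> F t (y t) + 1/2 * dotv (u - y t) (u - y t) <= F t u.
  by move=> t u Ku; exact: (@opt_strong R d K (c t) (x 1%N) (y t) Kcv (hy t).1 (hy t).2 u Ku).
have Fmin : forall t u, K u -> F t (y t) <= F t u by move=> t u Ku; exact: (hy t).2.
have Fstep : forall t u, F t.+1 u = F t u + eta * dotv (g t.+1) u.
  move=> t u; rewrite /F /Qf /c; have -> : \sum_(1 <= s < t.+2) g s = \sum_(1 <= s < t.+1) g s + g t.+1 by rewrite big_nat_recr.
  rewrite !dotvZl (dotvDl (\sum_(1 <= s < t.+1) g s)).
  rewrite mulrDr; lra.
have F0 : forall u, F 0%N u = 1/2 * dotv (u - x 1%N) (u - x 1%N).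
  by move=> u; rewrite /F /Qf /c big_geq // scaler0 dotv0l add0r.
pose e t := dotv (x t - y t) (x t - y t).
pose w t := dotv (x t - v t) (x t - v t).
pose p t := eta * dotv (g t) (x t - y t).
pose q t := F t.-1 (x t) - F t.-1 (y t.-1).
have I1 : forall t, (t < T)%N ->
    sigma * e t.+1 <= p t.+1 + sigma ^+ 2 / 2 * w t.+1 + (q t.+1 - q t.+2).
  move=> t tT.
  have [_ [Kv [hmin hx]]] := H t.+1 ltac:(lia).
  have Kxt : K (x t.+1) by apply: xK; lia.
  have Kxt2 : K (x t.+2) by apply: xK; lia.
  set dir := eta *: (\sum_(1 <= s < t.+2) g s) + (x t.+1 - x 1%N) in hmin.
  have a1 := Fstep t (x t.+1).
  have a2 := Fstep t (y t.+1).
  have a3 := opt t (y t.+1) (hy t.+1).1.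
  have a4 := dotv_ge0 (y t.+1 - y t).
  have a5 : p t.+1 = eta * dotv (g t.+1) (x t.+1) - eta * dotv (g t.+1) (y t.+1).
    by rewrite /p dotvBr mulrBr.
  have b1 := Qexp (c t.+1) (x 1%N) (x t.+2) (x t.+1).
  have b2 : x t.+2 - x t.+1 = sigma *: (v t.+1 - x t.+1).
    by rewrite hx; apply/rowP => i; rewrite !mxE; ring.
  rewrite b2 !dotvZr !dotvZl (dotvBr) in b1.
  have b3 := Qexp (c t.+1) (x 1%N) (y t.+1) (x t.+1).
  rewrite dotvBr in b3.
  have b4 := hmin (y t.+1) (hy t.+1).1.
  have b5 : dotv (v t.+1 - x t.+1) (v t.+1 - x t.+1) = w t.+1 by rewrite /w n2sym.
  have b6 : dotv (y t.+1 - x t.+1) (y t.+1 - x t.+1) = e t.+1 by rewrite /e n2sym.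
  rewrite b5 in b1; rewrite b6 in b3.
  have c1 := opt t.+1 (x t.+1) Kxt.
  rewrite -/(e t.+1) in c1.
  rewrite /q /= -/(F t.+1 (x t.+2)) -/(F t.+1 (y t.+1)).
  rewrite /F -/dir in a1 a2 a3 b1 b3 c1 *.
  set Fx1 := Qf (c t.+1) (x 1%N) (x t.+1) in a1 b1 b3 c1 *.
  set Fy1 := Qf (c t.+1) (x 1%N) (y t.+1) in a2 b3 c1 *.
  set Fx2 := Qf (c t.+1) (x 1%N) (x t.+2) in b1 *.
  set ee := e t.+1 in b3 c1 *.
  set ww := w t.+1 in b1 *.
  set dv := dotv dir (v t.+1) in b1 b4.
  set dx := dotv dir (x t.+1) in b1 b3.
  set dy := dotv dir (y t.+1) in b3 b4.
  have hs : sigma * dv <= sigma * dy by rewrite ler_pM2l.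
  have hs2 : sigma * (ee / 2) <= sigma * (Fx1 - Fy1) by rewrite ler_pM2l //; lra.
  rewrite a5 b1.
  have b7 : 0 <= sigma * (dx - dy - ee) by apply: mulr_ge0; lra.
  nra.
have Q1 : q 1%N <= 0.
  rewrite /q /= !F0 subrr dotv0l mulr0; have := dotv_ge0 (y 0%N - x 1%N); lra.
have QT : 0 <= q T.+1.
  rewrite /q /= subr_ge0; apply: Fmin; apply: xK; lia.
have S1 : sigma * \sum_(1 <= t < T.+1) e t <= \sum_(1 <= t < T.+1) p t
     + sigma ^+ 2 / 2 * \sum_(1 <= t < T.+1) w t + (q 1%N - q T.+1).
  have tel : \sum_(1 <= t < T.+1) (q t - q t.+1) = q 1%N - q T.+1.
    rewrite -(opprB (q T.+1)) -telescope_sumr // -sumrN.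
    by apply: eq_bigr => i _; rewrite opprB.
  rewrite -tel !mulr_sumr -!big_split /=; apply: ler_sum_nat => t /andP[t1 tT].
  case: t t1 tT => [//|t] _ tT; exact: I1.
have I2 : forall t, p t <= eta ^+ 2 / sigma * dotv (g t) (g t) + sigma / 4 * e t.
  move=> t; rewrite /p /e; move: (x t - y t) => z.
  have := dotv_ge0 ((2 * eta) *: g t - sigma *: z).
  rewrite !(dotvDl, dotvDr, dotvNl, dotvNr, dotvZl, dotvZr) (dotvC z (g t)) => h.
  rewrite -subr_ge0.
  set gg := dotv (g t) (g t) in h *; set zz := dotv z z in h *; set gz := dotv (g t) z in h *.
  have k : sigma * (eta ^+ 2 / sigma * gg + sigma / 4 * zz - eta * gz) =
     (4 * eta ^+ 2 * gg - 4 * eta * sigma * gz + sigma ^+ 2 * zz) / 4.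
    by field; rewrite gt_eqF.
  have : 0 <= sigma * (eta ^+ 2 / sigma * gg + sigma / 4 * zz - eta * gz) by rewrite k; nra.
  by rewrite pmulr_rge0.
have S2 : \sum_(1 <= t < T.+1) p t <= eta ^+ 2 / sigma * \sum_(1 <= t < T.+1) dotv (g t) (g t)
     + sigma / 4 * \sum_(1 <= t < T.+1) e t.
  rewrite !mulr_sumr -big_split /=; apply: ler_sum_nat => t _; exact: I2.
have I3 : forall t, eta * dotv (g t.+1) (y t.+1) <= F t.+1 (y t.+1) - F t (y t).
  move=> t; rewrite Fstep; have := Fmin t (y t.+1) (hy t.+1).1; lra.
have S3 : \sum_(1 <= t < T.+1) eta * dotv (g t) (y t) <= F T (y T) - F 0%N (y 0%N).
  rewrite big_add1 /=.
  have := @telescope_sumr R 0 T (fun k => F k (y k)) (leq0n T); move=> /= <-.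
  apply: ler_sum_nat => t _; exact: I3.
have FT : F T (y T) <= eta * \sum_(1 <= t < T.+1) dotv (g t) xstar
     + 1/2 * dotv (xstar - x 1%N) (xstar - x 1%N).
  have := Fmin T xstar Kxs; rewrite {2}/F /Qf /c dotvZl dotv_suml //.
have F0y : 0 <= F 0%N (y 0%N) by rewrite F0; have := dotv_ge0 (y 0%N - x 1%N); lra.
have I4 : forall t, (1 <= t <= T)%N -> eta * (ell t (x t) - ell t xstar) <=
    p t + eta * dotv (g t) (y t) - eta * dotv (g t) xstar.
  move=> t ht; have [hs _] := H t ht; have := hs xstar.
  rewrite /p !dotvBr => h; rewrite -mulrDr -mulrBr ler_pM2l //; lra.
have S4 : eta * \sum_(1 <= t < T.+1) (ell t (x t) - ell t xstar) <=
    \sum_(1 <= t < T.+1) p t + \sum_(1 <= t < T.+1) eta * dotv (g t) (y t)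
    - eta * \sum_(1 <= t < T.+1) dotv (g t) xstar.
  rewrite !mulr_sumr -big_split -sumrB /=; apply: ler_sum_nat => t ht; exact: I4.
set RT := \sum_(1 <= t < T.+1) (ell t (x t) - ell t xstar) in S4 *.
set P := \sum_(1 <= t < T.+1) p t in S1 S2 S4.
set E := \sum_(1 <= t < T.+1) e t in S1 S2.
set W := \sum_(1 <= t < T.+1) w t in S1.
set G2 := \sum_(1 <= t < T.+1) dotv (g t) (g t) in S2 *.
set N := dotv (xstar - x 1%N) (xstar - x 1%N) in FT *.
set GX := \sum_(1 <= t < T.+1) dotv (g t) xstar in S4 FT.
set GY := \sum_(1 <= t < T.+1) eta * dotv (g t) (y t) in S4 S3.
have hP : P <= 4/3 * (eta ^+ 2 / sigma * G2) + sigma ^+ 2 / 6 * W.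
  have : sigma / 4 * E = (sigma * E) / 4 by rewrite mulrAC.
  lra.
have hR : eta * RT <= 4/3 * (eta ^+ 2 / sigma * G2) + sigma ^+ 2 / 6 * W + 1/2 * N.
  lra.
rewrite -(ler_pM2l eta0).
have -> : eta * (4 / 3 * eta / sigma * G2 + sigma ^+ 2 / (2 * 3 * eta) * W + 1 / (2 * eta) * N)
   = 4/3 * (eta ^+ 2 / sigma * G2) + sigma ^+ 2 / 6 * W + 1/2 * N.
  by field; rewrite !gt_eqF.
exact: hR.
Qed.



Lemma pow14_4 {R : realType} (z : R) : 0 <= z -> (z `^ (1/4)) ^+ 4 = z.
Proof.
move=> z0; rewrite -powR_mulrn ?powR_ge0 // -powRrM.
by rewrite (_ : 1/4 * 4%:R = 1) ?powRr1 //; field.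
Qed.

Lemma pow34 {R : realType} (z : R) : 0 <= z -> z `^ (3/4) = (z `^ (1/4)) ^+ 3.
Proof.
move=> z0; rewrite -powR_mulrn ?powR_ge0 // -powRrM.
by congr (_ `^ _); field.
Qed.

Lemma pow4_34 {R : realType} (y : R) : 0 <= y -> (y ^+ 4) `^ (3/4) = y ^+ 3.
Proof.
move=> y0; rewrite -powR_mulrn // -powRrM -powR_mulrn //.
by congr (_ `^ _); field.
Qed.

Lemma traj_in_K {R : realType} {d : nat} (T : nat) (sigma : R) (K : set 'rV[R]_d)
  (x v : nat -> 'rV[R]_d) :
  0 <= sigma <= 1 -> convex_setv K -> K (x 1%N) ->
  (forall t, (1 <= t <= T)%N -> K (v t) /\ x t.+1 = (1 - sigma) *: x t + sigma *: v t) ->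
  forall t, (1 <= t <= T.+1)%N -> K (x t).
Proof.
move=> /andP[s0 s1] Kcv Kx1 H.
elim=> [//|t IH] ht.
case: t IH ht => [_ _|t IH ht]; first exact: Kx1.
have [Kv ->] := H t.+1 ltac:(lia).
have := Kcv (x t.+1) (v t.+1) (1 - sigma) (IH ltac:(lia)) Kv.
rewrite subKr; apply; lra.
Qed.

Lemma g_le_L {R : realType} {d : nat} (L : R) (f : 'rV[R]_d -> R) (z g : 'rV[R]_d) :
  0 < L -> lipschitzv L f -> subgradient f z g -> enorm g <= L.
Proof.
move=> L0 hl hs.
have h1 := hs (z + g); rewrite addrAC subrr add0r in h1.
have h2 := hl (z + g) z; rewrite addrAC subrr add0r in h2.
have h3 := ler_norm (f (z + g) - f z).
have e0 : 0 <= enorm g by apply: sqrtr_ge0.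
have : enorm g ^+ 2 <= L * enorm g by rewrite enorm_sq; lra.
nra.
Qed.

Lemma sq_le {R : realType} (u M : R) : 0 <= u -> u <= M -> u ^+ 2 <= M ^+ 2.
Proof. move=> u0 uM; nra. Qed.

Lemma num_bound {R : realType} (a : R) : 0 < a -> a ^+ 4 = 3 -> 4 / a ^+ 3 < 176/100.
Proof.
move=> a0 a4.
have ha : a < 132/100.
  rewrite ltNge; apply/negP => h.
  have e4 : a ^+ 4 = a ^+ 2 * a ^+ 2 by rewrite -exprD.
  have h2 : 17424/10000 <= a ^+ 2 by rewrite expr2; nra.
  nra.
rewrite ltr_pdivrMr ?exprn_gt0 //.
have e3 : a ^+ 3 * a = 3 by rewrite -exprSr.
nra.
Qed.

Theorem theorem1 (R : realType) (d T : nat) (L D : R)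
  (K : set 'rV[R]_d) (ell : nat -> 'rV[R]_d -> R)
  (x v g : nat -> 'rV[R]_d) :
  (3 <= T)%N -> 0 < L -> 0 < D ->
  K !=set0 -> closed K -> convex_setv K -> diam_le K D ->
  (forall t, (1 <= t <= T)%N -> convex_funv (ell t) /\ lipschitzv L (ell t)) ->
  let eta := D / (2 * L) * (3 / T%:R) `^ (3 / 4) in
  let sigma := Order.min 1 (Num.sqrt (3 / T%:R)) in
  K (x 1%N) ->
  (forall t, (1 <= t <= T)%N ->
     subgradient (ell t) (x t) (g t) /\
     let dir := eta *: (\sum_(1 <= s < t.+1) g s) + (x t - x 1%N) in
     K (v t) /\ (forall w, K w -> dotv dir (v t) <= dotv dir w) /\
     x t.+1 = (1 - sigma) *: x t + sigma *: v t) ->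
  forall xstar, K xstar ->
  let RT := \sum_(1 <= t < T.+1) (ell t (x t) - ell t xstar) in
  RT <= 2 * D / (L * 3 `^ (3 / 4) * T%:R `^ (1 / 4))
          * \sum_(1 <= t < T.+1) enorm (g t) ^+ 2
        + L / (D * 3 `^ (3 / 4) * T%:R `^ (1 / 4))
          * \sum_(1 <= t < T.+1) enorm (x t - v t) ^+ 2
        + L * T%:R `^ (3 / 4) / (D * 3 `^ (3 / 4)) * enorm (xstar - x 1%N) ^+ 2
  /\ RT <= 4 / 3 `^ (3 / 4) * L * D * T%:R `^ (3 / 4)
  /\ 4 / 3 `^ (3 / 4) * L * D * T%:R `^ (3 / 4) < 176 / 100 * L * D * T%:R `^ (3 / 4).
Proof.
move=> hT L0 D0 Kne Kcl Kcv Kd hell eta sigma Kx1 halg xstar Kxs RT.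
have T0 : 0 < T%:R :> R by rewrite ltr0n; lia.
have T3 : 3 <= T%:R :> R by rewrite ler_nat.
set a : R := 3 `^ (1/4).
set b : R := T%:R `^ (1/4).
have a0 : 0 < a by apply: powR_gt0.
have b0 : 0 < b by apply: powR_gt0.
have a4 : a ^+ 4 = 3 by rewrite pow14_4.
have b4 : b ^+ 4 = T%:R by rewrite pow14_4 // ltW.
have a3E : 3 `^ (3/4) = a ^+ 3 :> R by rewrite pow34.
have b3E : T%:R `^ (3/4) = b ^+ 3 :> R by rewrite pow34 // ltW.
have ratE : 3 / T%:R = (a / b) ^+ 4 by rewrite exprMn exprVn a4 b4.
have sigmaE : sigma = a ^+ 2 / b ^+ 2.
  rewrite /sigma.
  have -> : 3 / T%:R = (a ^+ 2 / b ^+ 2) ^+ 2.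
    by rewrite ratE !exprMn !exprVn -!exprM -exprD.
  rewrite sqrtr_sqr ger0_norm ?divr_ge0 ?exprn_ge0 ?ltW //.
  rewrite min_r //.
  rewrite ler_pdivrMr ?exprn_gt0 // mul1r.
  have : a ^+ 4 <= b ^+ 4 by rewrite a4 b4.
  nra.
have etaE : eta = D / (2 * L) * (a ^+ 3 / b ^+ 3).
  by rewrite /eta ratE pow4_34 ?divr_ge0 ?ltW // exprMn exprVn.
have eta0 : 0 < eta by rewrite etaE; apply: mulr_gt0; apply: divr_gt0 => //;
  try apply: exprn_gt0 => //; lra.
have sig0 : 0 < sigma by rewrite sigmaE divr_gt0 // exprn_gt0.
have sig1 : sigma <= 1 by rewrite /sigma ge_min lexx.
have hc := @core R d T D eta sigma K ell x v g xstar eta0 sig0 sig1 Kne Kcl Kcv Kd Kx1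
   halg Kxs.
have eG : \sum_(1 <= t < T.+1) enorm (g t) ^+ 2 = \sum_(1 <= t < T.+1) dotv (g t) (g t).
  by apply: eq_bigr => t _; exact: enorm_sq.
have eW : \sum_(1 <= t < T.+1) enorm (x t - v t) ^+ 2 =
    \sum_(1 <= t < T.+1) dotv (x t - v t) (x t - v t).
  by apply: eq_bigr => t _; exact: enorm_sq.
have L0' : L != 0 by rewrite gt_eqF.
have D0' : D != 0 by rewrite gt_eqF.
have a0' : a != 0 by rewrite gt_eqF.
have b0' : b != 0 by rewrite gt_eqF.
have c1 : 2 * D / (L * 3 `^ (3 / 4) * T%:R `^ (1 / 4)) = 4/3*eta/sigma.
  by rewrite a3E -/b etaE sigmaE -a4; field; rewrite b0' a0' L0'.
have c2 : L / (D * 3 `^ (3 / 4) * b) = sigma ^+ 2 / (2 * 3 * eta).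
  by rewrite a3E etaE sigmaE -a4; field; rewrite ?b0' ?a0' ?L0' ?D0'.
have c3 : L * T%:R `^ (3 / 4) / (D * 3 `^ (3 / 4)) = 1 / (2 * eta).
  by rewrite b3E a3E etaE; field; rewrite ?b0' ?a0' ?L0' ?D0'.
have N0 := dotv_ge0 (xstar - x 1%N).
split.
  by rewrite c1 c2 c3 eG eW enorm_sq.
have xK := @traj_in_K R d T sigma K x v ltac:(rewrite ltW //) Kcv Kx1
  (fun t ht => let: conj _ (conj h1 (conj _ h2)) := halg t ht in conj h1 h2).
have SG : \sum_(1 <= t < T.+1) dotv (g t) (g t) <= T%:R * L ^+ 2.
  apply: (@le_trans _ _ (\sum_(1 <= t < T.+1) L ^+ 2)); last first.
    by rewrite sumr_const_nat subSS subn0 mulr_natl.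
  apply: ler_sum_nat => t ht; rewrite -enorm_sq.
  have ht' : (1 <= t <= T)%N by move: ht; rewrite ltnS.
  have hg := @g_le_L R d L (ell t) (x t) (g t) L0 (hell t ht').2 (halg t ht').1.
  by apply: sq_le => //; apply: sqrtr_ge0.
have SW : \sum_(1 <= t < T.+1) dotv (x t - v t) (x t - v t) <= T%:R * D ^+ 2.
  apply: (@le_trans _ _ (\sum_(1 <= t < T.+1) D ^+ 2)); last first.
    by rewrite sumr_const_nat subSS subn0 mulr_natl.
  apply: ler_sum_nat => t ht; rewrite -enorm_sq.
  have ht' : (1 <= t <= T)%N by move: ht; rewrite ltnS.
  have hd := Kd _ _ (xK t ltac:(by case/andP: ht' => -> /= /leqW)) (halg t ht').2.1.
  by apply: sq_le => //; apply: sqrtr_ge0.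
have SN : dotv (xstar - x 1%N) (xstar - x 1%N) <= D ^+ 2.
  rewrite -enorm_sq; have hd := Kd _ _ Kxs Kx1.
  by apply: sq_le => //; apply: sqrtr_ge0.
have k1 : 0 <= 4/3 * eta / sigma by apply: divr_ge0; [apply: mulr_ge0 | ]; lra.
have k2 : 0 <= sigma ^+ 2 / (2 * 3 * eta) by apply: divr_ge0; [apply: exprn_ge0 |]; lra.
have k3 : 0 <= 1 / (2 * eta) by apply: divr_ge0; lra.
have fin : 4/3 * eta / sigma * (T%:R * L ^+ 2) + sigma ^+ 2 / (2 * 3 * eta) * (T%:R * D ^+ 2)
    + 1 / (2 * eta) * D ^+ 2 = 4 / a ^+ 3 * L * D * b ^+ 3.
  by rewrite etaE sigmaE -b4 -a4; field; rewrite ?b0' ?a0' ?L0' ?D0'.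
rewrite a3E b3E; split.
  rewrite -fin; apply: (le_trans hc).
  by apply: lerD; [apply: lerD|]; apply: ler_wpM2l.
have LDb : 0 < L * D * b ^+ 3 by rewrite !mulr_gt0 // exprn_gt0.
have h := @num_bound R a a0 a4.
rewrite -subr_gt0.
have -> : 176 / 100 * L * D * b ^+ 3 - 4 / a ^+ 3 * L * D * b ^+ 3
   = (176/100 - 4 / a ^+ 3) * (L * D * b ^+ 3) by ring.
by rewrite mulr_gt0 // subr_gt0.
Qed.
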